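(* Let $n\ge 2$ and let $g=(g_1,\dots,g_{n-1},0)$ be a smooth compactly supported vector field on $\mathbb{R}^{n-1}$. Then there exists a smooth divergence-free vector field $\phi=(\phi_1,\dots,\phi_n)$ on $\overline{\mathbb{R}^n_+}$, with compact support in $\overline{\mathbb{R}^n_+}$, such that $\phi|_{x_n=0}=0$ and $\frac{\partial\phi}{\partial x_n}\big|_{x_n=0}=g$.
   Context: $\mathbb{R}^n_+=\{x=(x',x_n)\in\mathbb{R}^n: x_n>0\}$, and $\mathbb{R}^{n-1}$ is identified with the boundary $\{x_n=0\}$. *)

(* Defs.v *)
From HB Require Import structures.
From mathcomp Require Import all_boot all_order all_algebra.
From mathcomp Require Import all_classical all_reals all_analysis.
Set Implicit Arguments. Unset Strict Implicit. Unset Printing Implicit Defensive.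
Import Order.TTheory GRing.Theory Num.Theory.
Import numFieldNormedType.Exports.
Local Open Scope classical_set_scope.
Local Open Scope ring_scope.

Section Defs.
Variable R : realType.

Definition ebasis {k : nat} (i : 'I_k) : 'rV[R]_k := \row_j ((j == i)%:R).

Definition elast {k : nat} : 'rV[R]_k := \row_j ((val j == k.-1)%:R).

(* last coordinate x_k of x in R^k (0 if k = 0) *)
Definition lastc {k : nat} (x : 'rV[R]_k) : R :=
  oapp (fun j => x 0 j) 0 (insub k.-1 : option 'I_k).

Definition partial {k : nat} (i : 'I_k) (f : 'rV[R]_k -> R) : 'rV[R]_k -> R :=
  fun x => derive f x (ebasis i).

Fixpoint Cm {k : nat} (m : nat) (f : 'rV[R]_k -> R) : Prop :=
  match m with
  | 0 => continuous f
  | m'.+1 => continuous f /\ (forall (i : 'I_k) x, derivable f x (ebasis i)) /\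
             (forall i : 'I_k, Cm m' (partial i f))
  end.

Definition smooth {k : nat} (f : 'rV[R]_k -> R) : Prop := forall m, Cm m f.

Definition divergence {k : nat} (phi : 'I_k -> 'rV[R]_k -> R) (x : 'rV[R]_k) : R :=
  \sum_(i < k) partial i (phi i) x.

(* boundary embedding R^{k-1} -> R^k, x' |-> (x', 0) *)
Definition bemb {k : nat} (x' : 'rV[R]_(k.-1)) : 'rV[R]_k :=
  \row_(i < k) oapp (fun j => x' 0 j) 0 (insub (val i) : option 'I_(k.-1)).

End Defs.
Arguments elast {R k}.
Arguments ebasis {R k}.

(* Main.v *)
Require Import Defs.
From HB Require Import structures.
From mathcomp Require Import all_boot all_order all_algebra.
From mathcomp Require Import all_classical all_reals all_analysis.
From mathcomp Require Import ring lra.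
Import Order.TTheory GRing.Theory Num.Theory.
Import numFieldNormedType.Exports.
Local Open Scope classical_set_scope.
Local Open Scope ring_scope.

Set Implicit Arguments. Unset Strict Implicit.

Section OneD.
Variable R : realType.
Implicit Types f g : R -> R.

Fixpoint D1 (k : nat) (f : R -> R) : Prop :=
  if k is k'.+1 then (forall x, derivable f x 1) /\ D1 k' (derive1 f) else True.

Definition sm1 f := forall k, D1 k f.

Lemma D1S k f : D1 k.+1 f -> D1 k f.
Proof.
elim: k f => [//|k IH] f [d H]; split => //; exact: IH.
Qed.

Lemma D1_add k : forall f g, D1 k f -> D1 k g -> D1 k (f + g).
Proof.
elim: k => [//|k IH] f g [df Hf] [dg Hg]; split.
  by move=> x; apply: derivableD.
have -> : derive1 (f + g) = derive1 f + derive1 g.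
  by apply/funext => x; rewrite /= !derive1E deriveD// -!derive1E.
exact: IH.
Qed.

Lemma D1_cst k c : D1 k (cst c).
Proof.
elim: k c => [//|k IH] c; split; first by move=> x; exact: derivable_cst.
have -> : derive1 (cst c) = cst (0:R) by apply/funext => x; rewrite derive1_cst.
exact: IH.
Qed.

Lemma D1_mul k : forall f g, D1 k f -> D1 k g -> D1 k (f * g).
Proof.
elim: k => [//|k IH] f g [df Hf] [dg Hg]; split.
  by move=> x; apply: derivableM.
have -> : derive1 (f * g) = f * derive1 g + g * derive1 f.
  by apply/funext => x; rewrite /= !derive1E deriveM// -!derive1E.
apply: D1_add; apply: IH => //; exact: D1S.
Qed.

Lemma D1_horner k (p : {poly R}) : D1 k (horner p).
Proof.
elim: k p => [//|k IH] p; split; first by move=> x; exact: derivable_horner.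
rewrite -derivE; exact: IH.
Qed.

Lemma D1_comp k : forall f g, D1 k f -> D1 k g -> D1 k (g \o f).
Proof.
elim: k => [//|k IH] f g [df Hf] [dg Hg]; split.
  move=> x; apply/derivable1_diffP/differentiable_comp; exact/derivable1_diffP.
have -> : derive1 (g \o f) = (derive1 g \o f) * derive1 f.
  by apply/funext => x; rewrite /= derive1_comp.
apply: D1_mul; last exact: Hf.
apply: IH => //; exact: D1S.
Qed.

End OneD.

Section Bump.
Variable R : realType.
Definition Fq (q : {poly R}) (s : R) : R :=
  if 0 < s then q.[s^-1] * expR (- s^-1) else 0.
Definition Tq (q : {poly R}) : {poly R} := 'X^2 * (q - q^`()).

Lemma Fq_pos (q : {poly R}) (x : R) : 0 < x -> is_derive x 1 (Fq q) (Fq (Tq q) x).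
Proof.
move=> x0.
have hx : x != 0 by rewrite gt_eqF.
pose G := fun s : R => q.[s^-1] * expR (- s^-1).
apply: (@near_eq_is_derive _ _ _ G).
  near=> s; rewrite /G /Fq ifT //; near: s.
  exact: lt_nbhsr.
have h1 : is_derive x 1 (fun s : R => s^-1) (- x ^- 2 *: 1).
  exact: (@is_deriveV R id x 1 1).
have h2 : is_derive x 1 (horner q \o (fun s : R => s^-1)) (q^`().[x^-1] * (- x ^- 2 *: 1)).
  exact: is_derive1_comp.
have h3 : is_derive x 1 (fun s : R => - s^-1) (- (- x ^- 2 *: 1)).
  exact: is_deriveN.
have h4 : is_derive x 1 (expR \o (fun s : R => - s^-1)) (expR (- x^-1) * (- (- x ^- 2 *: 1))).
  exact: is_derive1_comp.
have h5 := is_deriveM h2 h4.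
have -> : G = (horner q \o (fun s : R => s^-1)) * (expR \o (fun s : R => - s^-1)) by [].
apply: is_derive_eq h5 _.
rewrite /Fq ifT // /Tq /=.
rewrite !hornerE /= -exprVn.
rewrite /GRing.scale /=.
ring.
Unshelve. all: by end_near. Qed.

End Bump.

Section Bump2.
Variable R : realType.

Lemma Fq_bound (q : {poly R}) : exists C : R, 0 <= C /\
  forall h : R, 0 < h -> h <= 1 -> `|h^-1 * Fq q h| <= C * h.
Proof.
set d := size q; set A : R := \sum_(i < d) `|q`_i|; set N : R := ((d.+2)`!)%:R.
have A0 : 0 <= A by apply: sumr_ge0 => i _.
have N0 : 0 < N by rewrite ltr0n fact_gt0.
exists (A * N); split; first by rewrite mulr_ge0 // ltW.
move=> h h0 h1; rewrite /Fq h0.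
set u := h^-1.
have u1 : 1 <= u by rewrite /u invf_ge1.
have u0 : 0 < u by lra.
have Hq : `|q.[u]| <= A * u ^+ d.
  rewrite horner_coef; apply: le_trans (ler_norm_sum _ _ _) _.
  rewrite /A mulr_suml; apply: ler_sum => i _.
  rewrite normrM normrX (ger0_norm (ltW u0)); apply: ler_wpM2l => //.
  by apply: ler_weXn2l => //; apply: ltnW.
have He : expR (- u) <= N / u ^+ d.+2.
  rewrite expRN -invf_div lef_pV2 ?posrE ?expR_gt0 ?divr_gt0 ?exprn_gt0 //.
  apply: le_trans (expR_ge1Dxn _ (ltW u0)); lra.
rewrite normrM normrM (ger0_norm (ltW u0)) (ger0_norm (ltW (expR_gt0 _))).
apply: (le_trans (y := u * (A * u ^+ d) * (N / u ^+ d.+2))).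
  rewrite mulrA; apply: ler_pM.
  - by rewrite mulr_ge0 // ltW.
  - exact: ltW (expR_gt0 _).
  - by apply: ler_wpM2l => //; rewrite ltW.
  - exact: He.
have -> : h = u^-1 by rewrite /u invrK.
have ud : u ^+ d != 0 by rewrite expf_neq0 // gt_eqF.
rewrite !exprS; clearbody A N u; have wn0 : u != 0 by rewrite gt_eqF.
move: A N u ud wn0 {A0 N0 u1 u0 Hq He} => a n w wd wn0; rewrite le_eqVlt; apply/orP; left; apply/eqP; field.
by rewrite wn0 wd.
Qed.

End Bump2.

Section Bump3.
Variable R : realType.

Lemma Fq_zero (q : {poly R}) : is_derive (0:R) (1:R) (Fq q) 0.
Proof.
have [C [C0 HC]] := Fq_bound q.
have Cn : (fun h : R => C * `|h|) @ (0:R)^' --> (0:R).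
  have H : (fun h : R => C * `|h|) @ (0:R) --> (0:R).
    rewrite -[X in _ --> X](mulr0 C).
    apply: (@cvgM _ _ _ _ (fun=> C) (fun h : R => `|h|)); first exact: cvg_cst.
    have := @cvg_norm _ _ _ _ _ (fun h : R => h) (0:R) (@cvg_id _ _).
    rewrite normr0; apply; exact: _.
  exact: (cvg_trans (cvg_app _ (@nbhs_dnbhs _ (0:R))) H).
have L : (fun h : R => h^-1 *: ((Fq q \o shift 0) (h *: 1) - Fq q 0)) @ (0:R)^' --> (0:R).
  apply: (@squeeze_cvgr _ _ _ _ (fun h => - (C * `|h|)) (fun h => C * `|h|)); last first.
  - exact: Cn.
  - rewrite -[X in _ --> X]oppr0; exact: cvgN Cn.
  near=> h.
  have hn0 : h != 0 by near: h; exact: nbhs_dnbhs_neq.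
  have h1 : `|h| < 1 by near: h; exact: dnbhs0_lt.
  have F0 : Fq q 0 = 0 by rewrite /Fq ltxx.
  rewrite /= /shift addr0 [h *: 1]mulr1 F0 subr0 -ler_norml -[h^-1 *: _]/(h^-1 * _).
  case: (ltP 0 h) => hpos.
    rewrite (gtr0_norm hpos); apply: HC => //.
    by rewrite (gtr0_norm hpos) in h1; exact: ltW.
  rewrite /Fq ltNge hpos /= mulr0 normr0.
  by rewrite mulr_ge0.
apply: DeriveDef; first by apply/cvg_ex; exists 0.
exact: cvg_lim L.
Unshelve. all: by end_near. Qed.

Lemma Fq_neg (q : {poly R}) (x : R) : x < 0 -> is_derive x (1:R) (Fq q) (Fq (Tq q) x).
Proof.
move=> x0.
apply: (@near_eq_is_derive _ _ _ (cst 0)).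
  near=> s; rewrite /Fq ifF //; apply/negbTE; rewrite -leNgt; apply/ltW.
  near: s; exact: lt_nbhsl.
by apply: is_derive_eq; rewrite /Fq ifF //; apply/negbTE; rewrite -leNgt; apply/ltW.
Unshelve. all: by end_near. Qed.

Lemma Fq_der (q : {poly R}) (x : R) : is_derive x (1:R) (Fq q) (Fq (Tq q) x).
Proof.
case: (ltgtP x 0) => hx.
- exact: Fq_neg.
- exact: Fq_pos.
- by rewrite hx {2}/Fq ltxx; exact: Fq_zero.
Qed.

Lemma D1_Fq k : forall q : {poly R}, D1 k (Fq q).
Proof.
elim: k => [//|k IH] q; split.
  by move=> x; case: (Fq_der q x).
have -> : derive1 (Fq q) = Fq (Tq q).
  by apply/funext => x; rewrite derive1E; case: (Fq_der q x).
exact: IH.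
Qed.

End Bump3.

Section HK.
Variable R : realType.

Definition Pc : {poly R} := (2^-1 * expR 1) *: 'X^2.
Definition Gc : R -> R := Fq (1 : {poly R}) \o horner (1 - 'X^2).
Definition Hc : R -> R := horner Pc * Gc.
Definition Kc : R -> R := derive1 Hc.

Lemma sm1_Gc : sm1 Gc.
Proof. move=> k; apply: D1_comp; [exact: D1_horner | exact: D1_Fq]. Qed.

Lemma sm1_Hc : sm1 Hc.
Proof. move=> k; apply: D1_mul; [exact: D1_horner | exact: sm1_Gc]. Qed.

Lemma sm1_Kc : sm1 Kc.
Proof. move=> k; have [_ h] := sm1_Hc k.+1; exact: h. Qed.

Lemma Hc0 : Hc 0 = 0.
Proof. by change (Pc.[0] * Gc 0 = 0); rewrite /Pc hornerZ hornerXn expr0n /= mulr0 mul0r. Qed.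

Lemma Gc_der x : derivable Gc x 1.
Proof. by have [h _] := sm1_Gc 1; exact: h. Qed.

Lemma Gc'_der x : derivable (derive1 Gc) x 1.
Proof. by have [_ [h _]] := sm1_Gc 2; exact: h. Qed.

Lemma Pc'E : Pc^`() = (2^-1 * expR 1) *: ('X *+ 2).
Proof. by rewrite /Pc derivZ derivXn. Qed.

Lemma Pc''E : Pc^`()^`() = (2^-1 * expR 1) *: (1 *+ 2).
Proof. by rewrite Pc'E derivZ derivMn derivX. Qed.

Lemma KcE : Kc = horner Pc * derive1 Gc + Gc * horner Pc^`().
Proof.
apply/funext => x; rewrite /Kc /Hc derive1E deriveM; [|exact: derivable_horner|exact: Gc_der].
by rewrite -!derive1E derivE.
Qed.

Lemma Kc0 : Kc 0 = 0.
Proof.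
rewrite KcE; change (Pc.[0] * derive1 Gc 0 + Gc 0 * Pc^`().[0] = 0).
by rewrite Pc'E /Pc !hornerE /=; ring.
Qed.

Lemma Gc0 : Gc 0 = (expR 1)^-1.
Proof.
by rewrite /Gc /= /Fq !hornerE expr0n /= subr0 ltr01 invr1 expRN.
Qed.

Lemma Kc'0 : derive1 Kc 0 = 1.
Proof.
have d1 := Gc_der (x:=0); have d2 := Gc'_der (x:=0); have d3 := @derivable_horner R Pc 0.
have d4 := @derivable_horner R Pc^`() 0.
rewrite KcE derive1E deriveD; first last.
- exact: (derivableM d1 d4).
- exact: (derivableM d3 d2).
rewrite (deriveM d3 d2) (deriveM d1 d4) -!derive1E -!derivE Pc''E Pc'E Gc0 /Pc /= !hornerE /=.
rewrite !mulr0 scale0r scaler0 scale0r !add0r addr0.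
rewrite -[_ *: _]/(_ * _); field.
by rewrite gt_eqF // expR_gt0.
Qed.

Lemma Hc_out (t : R) : 1 <= `|t| -> Hc t = 0.
Proof.
move=> t1; change (Pc.[t] * Fq 1 (1 - 'X^2).[t] = 0).
rewrite /Fq ifF ?mulr0 //; apply/negbTE; rewrite -leNgt !hornerE.
move: t1; rewrite ler_normr => /orP[] h; nra.
Qed.

Lemma Kc_out (t : R) : 1 < `|t| -> Kc t = 0.
Proof.
move=> t1; rewrite /Kc derive1E.
rewrite (@near_eq_derive _ _ _ Hc (cst 0)) ?derive_cst //.
move: t1; rewrite ltr_normr => /orP[] h.
  near=> s; rewrite Hc_out //=; apply: ltW; rewrite ltr_normr; apply/orP; left.
  near: s; exact: lt_nbhsr.
near=> s; rewrite Hc_out //=; apply: ltW; rewrite ltr_normr; apply/orP; right.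
rewrite ltrNr; near: s; apply: lt_nbhsl; by rewrite ltrNr.
Unshelve. all: by end_near. Qed.

End HK.

Section Gen.
Variable R : realType.
Variable k : nat.
Implicit Types f g : 'rV[R]_k -> R.

Lemma class_smooth (P : ('rV[R]_k -> R) -> Prop) :
  (forall f, P f -> continuous f /\ (forall i x, derivable f x (ebasis i)) /\
     (forall i, P (partial i f))) -> forall f, P f -> smooth f.
Proof.
move=> H f Pf m; elim: m f Pf => [|m IH] f Pf; have [c [d p]] := H f Pf => //.
split => //; split => // i; exact: IH.
Qed.

Lemma Cm_add m : forall f g, Cm m f -> Cm m g -> Cm m (fun y => f y + g y).
Proof.
elim: m => [|m IH] f g.
  by move=> cf cg x; apply: continuousD; [apply: cf|apply: cg].
move=> [cf [df pf]] [cg [dg pg]]; split; first by move=> x; apply: continuousD; [apply: cf|apply: cg].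
split; first by move=> i x; apply: derivableD.
move=> i.
have -> : partial i (fun y => f y + g y) = fun y => partial i f y + partial i g y.
  by apply/funext => y; rewrite /partial deriveD.
by apply: IH; [exact: pf|exact: pg].
Qed.

Lemma Cm_opp m : forall f, Cm m f -> Cm m (fun y => - f y).
Proof.
elim: m => [|m IH] f.
  by move=> cf x; apply: continuousN; apply: cf.
move=> [cf [df pf]]; split; first by move=> x; apply: continuousN; apply: cf.
split; first by move=> i x; apply: derivableN.
move=> i.
have -> : partial i (fun y => - f y) = fun y => - partial i f y.
  by apply/funext => y; rewrite /partial deriveN.
by apply: IH; exact: pf.
Qed.

Lemma Cm_cst m (c : R) : Cm m (fun _ : 'rV[R]_k => c).
Proof.
elim: m c => [|m IH] c; first by move=> x; exact: cst_continuous.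
split; first by move=> x; exact: cst_continuous.
split; first by move=> i x; exact: derivable_cst.
move=> i.
have -> : partial i (fun _ : 'rV[R]_k => c) = fun _ => 0.
  by apply/funext => y; rewrite /partial derive_cst.
exact: IH.
Qed.

Lemma smooth_add f g : smooth f -> smooth g -> smooth (fun y => f y + g y).
Proof. by move=> sf sg m; apply: Cm_add. Qed.

Lemma smooth_opp f : smooth f -> smooth (fun y => - f y).
Proof. by move=> sf m; apply: Cm_opp. Qed.

Lemma smooth_sum n (F : 'I_n -> 'rV[R]_k -> R) :
  (forall j, smooth (F j)) -> smooth (fun y => \sum_(j < n) F j y).
Proof.
elim: n F => [|n IH] F sF.
  have -> : (fun y => \sum_(j < 0) F j y) = fun _ => 0.
    by apply/funext => y; rewrite big_ord0.
  move=> m; exact: Cm_cst.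
have -> : (fun y => \sum_(j < n.+1) F j y) =
   fun y => \sum_(j < n) F (widen_ord (leqnSn n) j) y + F ord_max y.
  by apply/funext => y; rewrite big_ord_recr.
apply: smooth_add => //; apply: IH => j; exact: sF.
Qed.

Lemma smooth_partial f i : smooth f -> smooth (partial i f).
Proof. by move=> sf m; have [_ [_ h]] := sf m.+1; exact: h. Qed.

Lemma smooth_derivable f i x : smooth f -> derivable f x (ebasis i).
Proof. by move=> sf; have [_ [h _]] := sf 1%N; exact: h. Qed.

Lemma smooth_cont f : smooth f -> continuous f.
Proof. by move=> sf; exact: (sf 0%N). Qed.

End Gen.

Section Multi.
Variable R : realType.
Variable m : nat.

Definition wid (j : 'I_m) : 'I_m.+1 := widen_ord (leqnSn m) j.
Definition dropv (x : 'rV[R]_m.+1) : 'rV[R]_m := \row_j x 0 (wid j).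
Definition lst (x : 'rV[R]_m.+1) : R := x 0 ord_max.

Lemma lastcE (x : 'rV[R]_m.+1) : lastc x = lst x.
Proof.
rewrite /lastc /=; case: insubP => [i _ hi|]; last by rewrite /= ltnSn.
by rewrite /lst /=; congr (x 0 _); apply/val_inj.
Qed.

Lemma drop_bemb (x' : 'rV[R]_m) : dropv (bemb (k:=m.+1) x') = x'.
Proof.
apply/rowP => j; rewrite !mxE /=.
case: insubP => [i _ hi|]; last by rewrite /= ltn_ord.
by rewrite /=; congr (x' 0 _); apply/val_inj.
Qed.

Lemma lst_bemb (x' : 'rV[R]_m) : lst (bemb (k:=m.+1) x') = 0.
Proof.
rewrite /lst !mxE /=.
by case: insubP => [i _ hi|//]; move: (ltn_ord i); rewrite hi ltnn.
Qed.

Lemma elastE : elast = ebasis (ord_max : 'I_m.+1) :> 'rV[R]_m.+1.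
Proof. by apply/rowP => j; rewrite !mxE. Qed.

Lemma wid_neq (j : 'I_m) : (wid j == ord_max) = false.
Proof. by apply/negbTE; rewrite -val_eqE /= neq_ltn ltn_ord. Qed.

Lemma drop_shift_w (h : R) (j : 'I_m) x :
  dropv (h *: ebasis (wid j) + x) = h *: ebasis j + dropv x.
Proof. by apply/rowP => i; rewrite !mxE. Qed.

Lemma lst_shift_w (h : R) (j : 'I_m) x :
  lst (h *: ebasis (wid j) + x) = lst x.
Proof. by rewrite /lst !mxE eq_sym wid_neq mulr0 add0r. Qed.

Lemma drop_shift_l (h : R) x : dropv (h *: ebasis ord_max + x) = dropv x.
Proof. by apply/rowP => i; rewrite !mxE wid_neq mulr0 add0r. Qed.

Lemma lst_shift_l (h : R) x : lst (h *: ebasis ord_max + x) = h + lst x.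
Proof. by rewrite /lst !mxE eqxx mulr1. Qed.

Lemma ord_split (i : 'I_m.+1) : (exists j, i = wid j) \/ i = ord_max.
Proof.
case: (unliftP ord_max i) => [j ->|->]; last by right.
by left; exists j; apply/val_inj; rewrite /= /bump leqNgt ltn_ord.
Qed.

Lemma drop_continuous : continuous dropv.
Proof.
move=> x; apply: (proj2 (@cvg_mx_entourageP _ _ _ (dropv @ x) (fmap_filter dropv (nbhs_filter x)) (dropv x))) => A entA.
have := (proj1 (@cvg_mx_entourageP _ _ _ (nbhs x) (nbhs_filter x) x)) (@cvg_id _ (nbhs x)) A entA.
by apply: filterS => y H i j; rewrite !mxE; apply: H.
Qed.

Lemma lst_continuous : continuous lst.
Proof. exact: coord_continuous. Qed.

Lemma prod_cont (a : 'rV[R]_m -> R) (b : R -> R) :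
  continuous a -> (forall t, derivable b t 1) ->
  continuous (fun y => a (dropv y) * b (lst y)).
Proof.
move=> ca db x.
apply: (@continuousM _ _ (a \o dropv) (b \o lst)).
  apply: continuous_comp; [exact: drop_continuous | exact: ca].
apply: continuous_comp; first exact: lst_continuous.
exact/differentiable_continuous/derivable1_diffP.
Qed.

Lemma prod_der_w (a : 'rV[R]_m -> R) (b : R -> R) x (j : 'I_m) :
  derivable a (dropv x) (ebasis j) ->
  derivable (fun y => a (dropv y) * b (lst y)) x (ebasis (wid j)) /\
  derive (fun y => a (dropv y) * b (lst y)) x (ebasis (wid j)) =
    b (lst x) * derive a (dropv x) (ebasis j).
Proof.
move=> da.
set f := fun y => _.
have E : (fun h : R => h^-1 *: ((f \o shift x) (h *: ebasis (wid j)) - f x)) =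
  (b (lst x)) \*: (fun h : R => h^-1 *: ((a \o shift (dropv x)) (h *: ebasis j) - a (dropv x))).
  apply/funext => h; rewrite /f /= /shift drop_shift_w lst_shift_w.
  rewrite /GRing.scale /=; ring.
split.
  rewrite /derivable E; apply/cvg_ex; exists (b (lst x) *: derive a (dropv x) (ebasis j)).
  exact: cvgZl_tmp.
by rewrite /derive E limZl_tmp.
Qed.

Lemma prod_der_l (a : 'rV[R]_m -> R) (b : R -> R) x :
  derivable b (lst x) 1 ->
  derivable (fun y => a (dropv y) * b (lst y)) x (ebasis ord_max) /\
  derive (fun y => a (dropv y) * b (lst y)) x (ebasis ord_max) =
    a (dropv x) * derive b (lst x) 1.
Proof.
move=> db.
set f := fun y => _.
have E : (fun h : R => h^-1 *: ((f \o shift x) (h *: ebasis ord_max) - f x)) =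
  (a (dropv x)) \*: (fun h : R => h^-1 *: ((b \o shift (lst x)) (h *: 1) - b (lst x))).
  apply/funext => h; rewrite /f /= /shift drop_shift_l lst_shift_l.
  rewrite /GRing.scale /= mulr1; ring.
split.
  rewrite /derivable E; apply/cvg_ex; exists (a (dropv x) *: derive b (lst x) 1).
  exact: cvgZl_tmp.
by rewrite /derive E limZl_tmp.
Qed.

Definition PC (f : 'rV[R]_m.+1 -> R) :=
  exists a b, smooth a /\ sm1 b /\ f = fun y => a (dropv y) * b (lst y).

Lemma PC_smooth f : PC f -> smooth f.
Proof.
apply: class_smooth => f0 [a [b [sa [sb ->]]]].
have db : forall t, derivable b t 1 by move=> t; have [h _] := sb 1%N; exact: h.
split; first exact: prod_cont (smooth_cont sa) db.
split.
  move=> i x; case: (ord_split i) => [[j ->]|->].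
  - exact: (@prod_der_w a b x j (smooth_derivable sa)).1.
  - exact: (@prod_der_l a b x (db _)).1.
move=> i; case: (ord_split i) => [[j ->]|->].
- exists (partial j a), b; split; first exact: smooth_partial.
  split => //; apply/funext => y.
  by rewrite /partial (@prod_der_w a b y j (smooth_derivable sa)).2 mulrC.
- exists a, (derive1 b); split => //; split.
    by move=> k; have [_ h] := sb k.+1; exact: h.
  apply/funext => y.
  by rewrite /partial (@prod_der_l a b y (db _)).2 derive1E.
Qed.

End Multi.

Section Comp.
Variable R : realType.
Variable m : nat.

Lemma not_closure_deriv (G : 'rV[R]_m -> R) (A : set 'rV[R]_m) y v :
  (forall z, G z != 0 -> A z) -> derive G y v != 0 -> closure A y.
Proof.
move=> HA Hd B nB; apply/set0P/negP => /eqP AB0.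
have Hn : \forall z \near y, G z = cst 0 z.
  apply: filterS nB => z Bz; apply/eqP; apply: contraT => Gz.
  have : (A `&` B) z by split; [exact: HA | exact: Bz].
  by rewrite AB0.
by move: Hd; rewrite (near_eq_derive _ Hn) derive_cst eqxx.
Qed.

Lemma compact_supp (phi : 'I_m.+1 -> 'rV[R]_m.+1 -> R) (Kg : set 'rV[R]_m) :
  compact Kg -> (forall i x, phi i x != 0 -> Kg (dropv x) /\ `|lst x| <= 1) ->
  compact (closure [set x | 0 <= lastc x /\ exists i, phi i x != 0]).
Proof.
move=> cK H.
pose A := fun i : 'I_m.+1 => match unlift ord_max i with
  | Some j => (fun y : 'rV[R]_m => y 0 j) @` Kg | None => `[-1, 1]%classic end.
have cC : compact [set v : 'rV[R]_m.+1 | forall i, A i (v 0 i)].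
  apply: rV_compact => i; rewrite /A; case: unlift => [j|].
  - apply: continuous_compact => //; apply: continuous_subspaceT.
    exact: coord_continuous.
  - exact: segment_compact.
apply: subclosed_compact; [exact: closed_closure | exact: cC | ].
rewrite [X in _ `<=` X](closure_id _).1; last by apply: compact_closed => //; exact: norm_hausdorff.
apply: closure_subset => x [_ [i /H [Kx lx]]] l.
rewrite /A; case: (unliftP ord_max l) => [j ->|->].
  exists (dropv x) => //; rewrite mxE; congr (x 0 _); apply/val_inj.
  by rewrite /= /bump leqNgt ltn_ord.
by rewrite /= in_itv /= -ler_norml.
Qed.

End Comp.

Unset Implicit Arguments. Set Strict Implicit.

Theorem mainTheorem2 (R : realType) (n : nat) (hn : (2 <= n)%N)
  (g : 'I_n -> 'rV[R]_(n.-1) -> R)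
  (g_smooth : forall i, smooth (g i))
  (g_supp : compact (closure [set x' | exists i, g i x' != 0]))
  (g_last : forall i : 'I_n, val i = n.-1 -> forall x', g i x' = 0) :
  exists phi : 'I_n -> 'rV[R]_n -> R,
    (forall i, smooth (phi i)) /\
    (forall x, 0 <= lastc x -> divergence phi x = 0) /\
    compact (closure [set x | 0 <= lastc x /\ exists i, phi i x != 0]) /\
    (forall i x', phi i (bemb x') = 0) /\
    (forall i x', derive (phi i) (bemb x') elast = g i x').
Proof.
case: n hn g g_smooth g_supp g_last => [//|m] hn g g_smooth g_supp g_last.
rewrite /= in g g_smooth g_supp g_last *.
pose D := fun y : 'rV[R]_m => \sum_(j < m) partial j (g (wid j)) y.
pose a := fun i : 'I_m.+1 => if (val i < m)%N then g i else (fun y => - D y).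
pose b := fun i : 'I_m.+1 => if (val i < m)%N then Kc (R:=R) else Hc (R:=R).
have sa : forall i, smooth (a i).
  move=> i; rewrite /a; case: ifP => _; first exact: g_smooth.
  apply: smooth_opp; apply: smooth_sum => j; apply: smooth_partial; exact: g_smooth.
have sb : forall i, sm1 (b i).
  by move=> i; rewrite /b; case: ifP => _; [exact: sm1_Kc | exact: sm1_Hc].
have db : forall i t, derivable (b i) t 1.
  by move=> i t; have [h _] := sb i 1%N; exact: h.
exists (fun i y => a i (dropv y) * b i (lst y)).
split.
  by move=> i; apply: PC_smooth; exists (a i), (b i).
split.
  move=> x _; rewrite /divergence big_ord_recr /=.
  rewrite (eq_bigr (fun j : 'I_m => Kc (lst x) * partial j (g (wid j)) (dropv x))); last first.
    move=> j _.
    have := (@prod_der_w R m (a (wid j)) (b (wid j)) x j (smooth_derivable (sa _))).2.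
    by rewrite /a /b /= ltn_ord /partial.
  have := (@prod_der_l R m (a ord_max) (b ord_max) x (db _ _)).2.
  rewrite /a /b /= ltnn /partial => ->.
  rewrite -derive1E -/(Kc (R:=R)) -mulr_sumr.
  rewrite -/(D (dropv x)).
  by rewrite mulNr mulrC addrN.
split.
  apply: (@compact_supp R m _ _ g_supp) => i x.
  rewrite mulf_eq0 negb_or => /andP[ha hb].
  split; last first.
    move: hb; rewrite /b; case: ifP => _ hb.
      by rewrite leNgt; apply/negP => /Kc_out h; rewrite h eqxx in hb.
    by rewrite leNgt; apply/negP => /ltW /Hc_out h; rewrite h eqxx in hb.
  move: ha; rewrite /a; case: ifP => _ ha.
    by apply: subset_closure; exists i.
  have : D (dropv x) != 0 by rewrite -(oppr_eq0) .
  rewrite /D => /eqP hD.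
  have [j hj] : exists j : 'I_m, partial j (g (wid j)) (dropv x) != 0.
    apply/not_existsP => hne; apply: hD; apply: big1 => j _.
    by apply/eqP; apply/negP => /negP; apply: hne.
  apply: (@not_closure_deriv R m (g (wid j)) _ _ (ebasis j)) hj.
  by move=> z hz; exists (wid j).
split.
  move=> i x'; rewrite lst_bemb /b; case: ifP => _.
    by rewrite Kc0 mulr0.
  by rewrite Hc0 mulr0.
move=> i x'.
rewrite elastE (@prod_der_l R m (a i) (b i) _ (db _ _)).2 drop_bemb lst_bemb -derive1E.
rewrite /a /b; case: ifP => hi.
  by rewrite Kc'0 mulr1.
rewrite -/(Kc (R:=R)) Kc0 mulr0 g_last //.
by apply/eqP; rewrite eqn_leq -ltnS ltn_ord leqNgt hi.
Qed.
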